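(* Let $G$ be a directed graph and $V_C\subseteq V(G)$ such that the LTI network on $G$ with control nodes $V_C$ is strongly structurally controllable. Let $(u,v)\in V(G)\times V(G)$ with $(u,v)\notin E(G)$, and let $G'=G+\{(u,v)\}$. If the LTI network on $G'$ with control nodes $V_C$ is strongly structurally controllable, then there exist a set $\mathcal{C}$ of node-disjoint chains covering $V(G)$ with set of sources $V_C$ and a time function $T$ for $\mathcal{C}$ such that $G\in\mathcal{G}^{\mathcal{C},T}$ and $G'\in\mathcal{G}^{\mathcal{C},T}$.
   Context: Graphs are directed, self-loops allowed; $V(G)=\{1,\ldots,n\}$; $G+E'$ has node set $V(G)$ and edge set $E(G)\cup E'$. $\mathcal{Q}(G)=\{A\in\mathbb{R}^{n\times n}:\text{for } i\neq j,\ A_{ij}\neq0\iff(j,i)\in E(G)\}$. For $V_C=\{j_1,\ldots,j_m\}$, $B=[e_{j_1},\ldots,e_{j_m}]$; the LTI network $\dot x=Ax+Bu$ on $G$ is strongly structurally controllable if $(A,B)$ is controllable for all $A\in\mathcal{Q}(G)$. A chain is a directed path graph with source (start node) and sink (end node); for a non-sink $v$, $v+1$ is its out-neighbor in the chain. For node-disjoint chains $\mathcal{C}=\{C_1,\ldots,C_m\}$, $V=\bigcup_iV(C_i)$, $\gamma=|V|-m+1$, a time function is $T:V\to\{1,\ldots,\gamma\}$ with (1) $T(v)=1$ for every source; (2) distinct non-source nodes get distinct values; (3) $T(v)<T(v+1)$ for non-sink $v$. $T_{\max}(v)=\gamma$ for a sink $v$, else $T_{\max}(v)=T(v+1)-1$.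 $\mathcal{G}^{\mathcal{C},T}$ is the set of graphs $G$ with $V(G)=V$, $\bigcup_iE(C_i)\subseteq E(G)$, and $(u,v)\notin E(G)$ whenever $(u,v)\notin\bigcup_iE(C_i)$ and $T_{\max}(u)<T(v)$. *)

(* Defs.v *)
From HB Require Import structures.
From mathcomp Require Import all_boot all_order all_algebra.
From mathcomp Require Import Rstruct.
From Stdlib Require Import Rdefinitions.
Set Implicit Arguments. Unset Strict Implicit. Unset Printing Implicit Defensive.
Import Order.TTheory GRing.Theory Num.Theory.

(* A directed graph on nodes 'I_n (= {1..n} shifted to {0..n-1}),
   self-loops allowed, is given by its edge set E : {set 'I_n * 'I_n}. *)

Local Open Scope ring_scope.

Definition in_Q n (E : {set 'I_n * 'I_n}) (A : 'M[R]_n) : Prop :=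
  forall i j : 'I_n, i != j -> (A i j != 0) = ((j, i) \in E).

(* Input matrix B = [e_{j_1}, ..., e_{j_m}] for the control node set VC. *)
Definition input_mx n (VC : {set 'I_n}) : 'M[R]_(n, #|VC|) :=
  \matrix_(i, k) (i == enum_val k)%:R.

Definition controllable n m (A : 'M[R]_n) (B : 'M[R]_(n, m)) : bool :=
  \rank (\mxrow_(k < n) (A ^+ k *m B)) == n.

Definition SSC n (E : {set 'I_n * 'I_n}) (VC : {set 'I_n}) : Prop :=
  forall A : 'M[R]_n, in_Q E A -> controllable A (input_mx VC).

Local Close Scope ring_scope.

(* A family of chains is a list of node sequences; each sequence c = [v1; ...; vk]
   is the chain v1 -> v2 -> ... -> vk (source v1, sink vk). *)
Definition chain_edges n (cs : seq (seq 'I_n)) : {set 'I_n * 'I_n} :=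
  [set e | has (fun c => e \in zip c (behead c)) cs].

Definition sources n (cs : seq (seq 'I_n)) : {set 'I_n} :=
  [set v | has (fun c => head v c == v) [seq c <- cs | c != [::]]].

Definition chain_cover n (cs : seq (seq 'I_n)) (VC : {set 'I_n}) : Prop :=
  [/\ all (fun c => c != [::]) cs,
      uniq (flatten cs),
      (forall v : 'I_n, v \in flatten cs) &
      sources cs = VC].

Definition gamma n (cs : seq (seq 'I_n)) : nat := n - size cs + 1.

(* out-neighbour v+1 of v in its chain (None iff v is a sink) *)
Definition succ n (cs : seq (seq 'I_n)) (v : 'I_n) : option 'I_n :=
  [pick w | (v, w) \in chain_edges cs].

Definition time_function n (cs : seq (seq 'I_n)) (T : 'I_n -> nat) : Prop :=
  [/\ (forall v, 1 <= T v <= gamma cs),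
      (forall v, v \in sources cs -> T v = 1),
      (forall v w, v \notin sources cs -> w \notin sources cs -> v != w -> T v != T w) &
      (forall v w, (v, w) \in chain_edges cs -> T v < T w)].

Definition Tmax n (cs : seq (seq 'I_n)) (T : 'I_n -> nat) (v : 'I_n) : nat :=
  match succ cs v with
  | Some w => T w - 1
  | None => gamma cs
  end.

Definition in_GCT n (cs : seq (seq 'I_n)) (T : 'I_n -> nat) (E : {set 'I_n * 'I_n}) : Prop :=
  chain_edges cs \subset E /\
  (forall u v : 'I_n, (u, v) \notin chain_edges cs -> Tmax cs T u < T v -> (u, v) \notin E).

(* Main.v *)
Require Import Defs.
From HB Require Import structures.
From mathcomp Require Import all_boot all_order all_algebra zify.
From mathcomp Require Import Rstruct.
From Stdlib Require Import Rdefinitions.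
Set Implicit Arguments. Unset Strict Implicit. Unset Printing Implicit Defensive.
Import Order.TTheory GRing.Theory Num.Theory.

Section LA.
Local Open Scope ring_scope.

Lemma not_ssc n (E : {set 'I_n * 'I_n}) (VC S : {set 'I_n}) :
  VC \subset S -> S != setT ->
  (forall x, x \in S -> #|[set w | ((x,w) \in E) && (w \notin S)]| != 1%N) ->
  ~ SSC E VC.
Proof.
move=> sVS nST hdeg hssc.
pose Nb j := [set w | ((j,w) \in E) && (w \notin S)].
pose g j i : R := if Some i == [pick w in Nb j] then 1 - (#|Nb j|)%:R else 1.
pose off i j : R := if (j,i) \in E then (if j \in S then g j i else 1) else 0.
pose A : 'M[R]_n := \matrix_(i, j) if i == j then - \sum_(k | (k \notin S) && (k != j)) off k j else off i j.
have hQ : in_Q E A.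
  move=> i j nij; rewrite mxE (negbTE nij) /off.
  case: ifP => hE; last by rewrite eqxx.
  case: ifP => hjS; last by rewrite oner_neq0.
  rewrite /g; case: pickP => [w hw|]; last by rewrite oner_neq0.
  case: ifP => _; last by rewrite oner_neq0.
  rewrite subr_eq0 eq_sym pnatr_eq1.
  have := hdeg j hjS; by [].
have hc := hssc A hQ.
pose z : 'rV[R]_n := \row_i (if i \in S then 0 else 1).
have zA : z *m A = 0.
  apply/matrixP => k j; rewrite !mxE.
  have -> : \sum_i z k i * A i j = \sum_(i | i \notin S) A i j.
    rewrite [RHS]big_mkcond; apply: eq_bigr => i _; rewrite /z !mxE.
    by case: (i \in S); rewrite ?mul0r ?mul1r.
  case hjS: (j \in S).
  - have -> : \sum_(i | i \notin S) A i j = \sum_(i in Nb j) g j i.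
      rewrite big_mkcond [RHS]big_mkcond; apply: eq_bigr => i _.
      rewrite !mxE /off !inE hjS.
      case: (boolP (i \in S)) => hiS /=; first by rewrite andbF.
      have -> : (i == j) = false by apply/negbTE; apply: contraNneq hiS => ->.
      by case: ((j, i) \in E).
    rewrite /g; case: pickP => [w hw|h0].
    + have -> : \sum_(i in Nb j) (if Some i == Some w then 1 - (#|Nb j|)%:R else 1)
          = \sum_(i in Nb j) (1 : R) + \sum_(i in Nb j) (if i == w then - (#|Nb j|)%:R else 0).
        rewrite -big_split; apply: eq_bigr => i _ /=.
        case: ifP => [/eqP[->]|ne]; first by rewrite eqxx.
        case: ifP => [/eqP e|_]; first by rewrite e eqxx in ne.
        by rewrite addr0.
      rewrite sumr_const (bigD1 w) //= eqxx big1 ?addr0 ?addrN //.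
      by move=> i /andP[_ /negbTE ->].
    + by rewrite big1 // => i; rewrite h0.
  - rewrite (bigD1 j) ?hjS //= mxE eqxx.
    rewrite [X in _ + X](eq_bigr (fun i => off i j)) ?addNr //.
    by move=> i /andP[_ /negbTE nij]; rewrite mxE nij.
have zB : z *m input_mx VC = 0.
  apply/matrixP => k l; rewrite !mxE.
  rewrite (bigD1 (enum_val l)) //= big1.
    rewrite !mxE eqxx.
    have : enum_val l \in S by apply: (subsetP sVS); apply: enum_valP.
    by move=> ->; rewrite mul0r addr0.
  by move=> i /negbTE hi; rewrite !mxE hi mulr0.
have zK : z *m (\mxrow_(k < n) (A ^+ k *m input_mx VC)) = 0.
  rewrite mul_mxrow -(mxrow0 (q_ := fun _ => #|VC|)).
  apply: eq_mxrow => k.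
  case: k => [[|k]] hk /=.
    by rewrite expr0 mul1mx zB.
  by rewrite exprS mulmxA -mulmxE mulmxA zA !mul0mx.
have : z = 0.
  apply: (row_free_inj hc); by rewrite zK mul0mx.
have : ~~ ([set: 'I_n] \subset S) by rewrite subTset.
case/subsetPn => x _ hx /matrixP/(_ 0 x).
by rewrite /z !mxE (negbTE hx) => /eqP; rewrite oner_eq0.
Qed.
End LA.
Section Seqs.
Variable T : eqType.
Implicit Types (c s t : seq T) (x y a b : T).

Lemma zipmem (s t : seq T) a b : (a, b) \in zip s t -> a \in s /\ b \in t.
Proof.
elim: s t => [|x s IH] [|z t] //=.
rewrite in_cons => /orP[/eqP[-> ->]|/IH[h1 h2]]; first by rewrite !inE !eqxx.
by rewrite !inE h1 h2 !orbT.
Qed.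

Lemma last_noedge c x : x \in c -> (forall w, (x, w) \notin zip c (behead c)) -> last x c = x.
Proof.
elim: c => [|a c IH] //=.
case: c IH => [|b c] IH /=.
  by rewrite inE => /eqP ->.
rewrite in_cons => /orP[/eqP ea|xin] h.
  by have := h b; rewrite ea in_cons eqxx.
have := IH xin; rewrite /= => -> //.
by move=> w; apply: contra (h w) => hw; rewrite in_cons hw orbT.
Qed.

Lemma zip_rcons_behead a c y :
  zip (rcons (a :: c) y) (behead (rcons (a :: c) y)) = rcons (zip (a :: c) c) (last a c, y).
Proof. by elim: c a => [|b c IH] a //=; rewrite -IH. Qed.

Lemma last_in x c : c != [::] -> last x c \in c.
Proof. by case: c => [|a c] //= _; apply: mem_last. Qed.

Definition gext x y c := if last x c == x then rcons c y else c.

Lemma map_gext_id x y cs : all (fun c => c != [::]) cs -> x \notin flatten cs ->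
  map (gext x y) cs = cs.
Proof.
elim: cs => [|c cs IH] //= /andP[nc ac]; rewrite mem_cat negb_or => /andP[xc xcs].
rewrite IH // /gext; case: eqP => // e.
by move: (last_in x nc); rewrite e (negbTE xc).
Qed.

Lemma perm_gext x y cs : all (fun c => c != [::]) cs -> uniq (flatten cs) ->
  has (fun c => last x c == x) cs ->
  perm_eq (flatten (map (gext x y) cs)) (y :: flatten cs).
Proof.
elim: cs => [|c cs IH] //= /andP[nc ac]; rewrite cat_uniq => /and3P[uc dis ucs].
rewrite /gext; case: ifP => [/eqP e _|ne /= hh].
  have xc : x \in c by rewrite -e last_in.
  have xn : x \notin flatten cs by apply: contra dis => h; apply/hasP; exists x.
  rewrite map_gext_id //.
  by rewrite cat_rcons -cat1s perm_catCA.
rewrite /=.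
apply: perm_trans (_ : perm_eq _ (c ++ y :: flatten cs)) _.
  by rewrite perm_cat2l; apply: IH.
by rewrite -cat1s perm_catCA.
Qed.

Lemma edges_gext x y cs e : all (fun c => c != [::]) cs -> uniq (flatten cs) ->
  has (fun c => last x c == x) cs ->
  has (fun c => e \in zip (gext x y c) (behead (gext x y c))) cs =
  (e == (x, y)) || has (fun c => e \in zip c (behead c)) cs.
Proof.
elim: cs => [|c cs IH] //= /andP[nc ac]; rewrite cat_uniq => /and3P[uc dis ucs].
rewrite {1 2}/gext; case: ifP => [/eqP e0 _|ne /= hh].
  have xc : x \in c by rewrite -e0 last_in.
  have xn : x \notin flatten cs by apply: contra dis => h; apply/hasP; exists x.
  have -> : has (fun c => e \in zip (gext x y c) (behead (gext x y c))) cs =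
            has (fun c => e \in zip c (behead c)) cs.
    transitivity (has (fun c => e \in zip c (behead c)) (map (gext x y) cs)).
      by rewrite has_map.
    by rewrite map_gext_id.
  case: c nc uc dis e0 xc => [|a c] // _ _ _ e0 _.
  rewrite zip_rcons_behead mem_rcons in_cons /=.
  move: e0; rewrite /= => ->.
  by rewrite orbA.
rewrite IH //.
by rewrite orbCA.
Qed.

Lemma head_rcons d c y : c != [::] -> head d (rcons c y) = head d c.
Proof. by case: c. Qed.

Lemma flatten_single (l : seq T) : flatten [seq [:: s] | s : T <- l] = l.
Proof. by elim: l => //= a l ->. Qed.

End Seqs.
Lemma nA a b c : a <= b - c + 1 -> a != b - c + 2. Proof. lia. Qed.
Lemma nB a b c : a <= b - c + 1 -> a < b - c + 2. Proof. lia. Qed.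
Lemma nC b c : c <= b -> 1 <= b - c + 2 <= b.+1 - c + 1. Proof. lia. Qed.
Lemma nD t b c : c <= b -> 1 <= t <= b - c + 1 -> 1 <= t <= b.+1 - c + 1. Proof. lia. Qed.

Lemma nE a b : a < b -> b - 1 < a -> False. Proof. lia. Qed.
Lemma nF a b c : a <= b - c + 1 -> b - c + 1 < a -> False. Proof. lia. Qed.

Section Comb.
Variables (n : nat) (E : {set 'I_n * 'I_n}) (VC : {set 'I_n}) (u v : 'I_n).
Let E' := (u, v) |: E.

Record Inv (S : {set 'I_n}) (cs : seq (seq 'I_n)) (T : 'I_n -> nat) : Prop := {
 i0 : VC \subset S;
 i1 : all (fun c => c != [::]) cs;
 i2 : uniq (flatten cs);
 i3 : forall w, (w \in flatten cs) = (w \in S);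
 i4 : sources cs = VC;
 i5 : size cs = #|VC|;
 i6 : chain_edges cs \subset E;
 i7 : forall w, w \in S -> 1 <= T w <= #|S| - #|VC| + 1;
 i8 : forall w, w \in VC -> T w = 1;
 i9 : forall w1 w2, w1 \in S -> w2 \in S -> w1 \notin VC -> w2 \notin VC -> w1 != w2 -> T w1 != T w2;
 i10 : forall a b, (a,b) \in chain_edges cs -> T a < T b;
 i11 : forall a b w, (a,b) \in chain_edges cs -> (a,w) \in E' -> w != b -> (w \in S) && (T w < T b) }.

Lemma ce_mem (cs : seq (seq 'I_n)) a b : (a, b) \in chain_edges cs ->
  (a \in flatten cs) /\ (b \in flatten cs).
Proof.
rewrite inE => /hasP[c cin /zipmem[ha hb]].
split; apply/flattenP; exists c => //; exact: mem_behead.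
Qed.

Lemma inv_init : Inv VC [seq [:: s] | s <- enum VC] (fun _ => 1).
Proof.
have noedge : forall e, e \notin chain_edges [seq [:: s] | s <- enum VC].
  move=> e; rewrite inE has_map; apply/hasPn => s _ /=; by [].
split => //.
- by apply/allP => c /mapP[s _ ->].
- by rewrite flatten_single enum_uniq.
- by move=> w; rewrite flatten_single mem_enum.
- apply/setP => w; rewrite inE.
  have -> : [seq c <- [seq [:: s] | s <- enum VC] | c != [::]] = [seq [:: s] | s <- enum VC].
    by apply/all_filterP; apply/allP => c /mapP[s _ ->].
  rewrite has_map /preim /=.
  by rewrite (has_pred1 w (enum VC)) mem_enum.
- by rewrite size_map -cardE.
- by apply/subsetP => e; rewrite (negbTE (noedge e)).
- by move=> w _; rewrite subnn.
- by move=> w1 w2 ->.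
- by move=> a b; rewrite (negbTE (noedge _)).
- by move=> a b w; rewrite (negbTE (noedge _)).
Qed.


Lemma inv_step S cs T x y : Inv S cs T -> x \in S -> y \notin S -> (x, y) \in E ->
  (forall w, (x, w) \in E' -> w \notin S -> w = y) ->
  Inv (y |: S) (map (gext x y) cs) (fun w => if w == y then #|S| - #|VC| + 2 else T w).
Proof.
case=> h0 h1 h2 h3 h4 h5 h6 h7 h8 h9 h10 h11 xS yS xyE hD.
have xyE' : (x, y) \in E' by rewrite /E' in_setU1 xyE orbT.
have ce_S : forall a b, (a, b) \in chain_edges cs -> (a \in S) /\ (b \in S).
  by move=> a b /ce_mem[]; rewrite !h3.
have nox : forall w, (x, w) \notin chain_edges cs.
  move=> w; apply/negP => hw.
  have [_ wS] := ce_S _ _ hw.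
  have yw : y != w by apply: contraNneq yS => ->.
  by case/andP: (h11 _ _ _ hw xyE' yw); rewrite (negbTE yS).
have hx : has (fun c => last x c == x) cs.
  move: (xS); rewrite -h3 => /flattenP[c cin xc].
  apply/hasP; exists c => //; apply/eqP; apply: last_noedge => // w.
  apply: contra (nox w) => hw; rewrite inE; apply/hasP; by exists c.
have hperm := perm_gext y h1 h2 hx.
have hedge : forall e, (e \in chain_edges (map (gext x y) cs)) = (e == (x, y)) || (e \in chain_edges cs).
  by move=> e; rewrite !inE has_map; apply: edges_gext.
have VCS : #|VC| <= #|S| by apply: subset_leq_card.
have cardS : #|y |: S| = #|S|.+1 by rewrite cardsU1 yS.
have TS : forall w, w \in S -> T w <= #|S| - #|VC| + 1 by move=> w /h7/andP[].
have yVC : y \notin VC by apply: contra yS; apply: (subsetP h0).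
split.
- by apply: subset_trans h0 (subsetU1 _ _).
- rewrite all_map; apply/allP => c cin /=; rewrite /gext; case: ifP => _.
    by rewrite -size_eq0 size_rcons.
  exact: (allP h1).
- by rewrite (perm_uniq hperm) /= h3 yS h2.
- by move=> w; rewrite (perm_mem hperm) in_cons h3 in_setU1.
- rewrite -h4; apply/setP => w; rewrite !inE.
  have -> : [seq c <- map (gext x y) cs | c != [::]] = map (gext x y) cs.
    apply/all_filterP; rewrite all_map; apply/allP => c cin /=.
    rewrite /gext; case: ifP => _; first by rewrite -size_eq0 size_rcons.
    exact: (allP h1).
  have -> : [seq c <- cs | c != [::]] = cs by apply/all_filterP.
  rewrite has_map; apply: eq_in_has => c cin /=.
  rewrite /gext; case: ifP => // _; rewrite head_rcons //.
  exact: (allP h1).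
- by rewrite size_map.
- apply/subsetP => e; rewrite hedge => /orP[/eqP ->|]; first by [].
  by move/(subsetP h6).
- move=> w; rewrite in_setU1 cardS; case: eqP => [_ _|nw /= wS].
    exact: nC.
  exact: nD (h7 _ wS).
- move=> w wVC; have -> : (w == y) = false by apply/eqP => e; rewrite -e wVC in yVC.
  exact: h8.
- move=> w1 w2; rewrite !in_setU1.
  case: (eqVneq w1 y) => [-> _|n1 /= w1S]; case: (eqVneq w2 y) => [-> _|n2 /= w2S] //.
  + move=> _ _ _; rewrite eq_sym; exact: nA (TS _ w2S).
  + move=> _ _ _; exact: nA (TS _ w1S).
  + exact: h9.
- move=> a b; rewrite hedge => /orP[/eqP[-> ->]|hab].
    rewrite eqxx; have -> : (x == y) = false by apply: contraNF yS => /eqP <-.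
    exact: nB (TS _ xS).
  have [aS bS] := ce_S _ _ hab.
  have -> : (a == y) = false by apply: contraNF yS => /eqP <-.
  have -> : (b == y) = false by apply: contraNF yS => /eqP <-.
  exact: h10.
- move=> a b w; rewrite hedge => /orP[/eqP[-> ->]|hab] haw nwb.
    have wS : w \in S by apply: contraT => wn; move: nwb; rewrite (hD w haw wn) eqxx.
    rewrite in_setU1 wS orbT eqxx (negbTE nwb) /=.
    exact: nB (TS _ wS).
  have [aS bS] := ce_S _ _ hab.
  have -> : (b == y) = false by apply: contraNF yS => /eqP <-.
  case/andP: (h11 _ _ _ hab haw nwb) => wS lt.
  have -> : (w == y) = false by apply: contraNF yS => /eqP <-.
  by rewrite in_setU1 wS orbT.
Qed.


Lemma inv_final cs T : Inv setT cs T ->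
  [/\ chain_cover cs VC, time_function cs T, in_GCT cs T E & in_GCT cs T E'].
Proof.
case=> h0 h1 h2 h3 h4 h5 h6 h7 h8 h9 h10 h11.
have cT : #|[set: 'I_n]| = n by rewrite cardsT card_ord.
have hg : gamma cs = #|[set: 'I_n]| - #|VC| + 1 by rewrite /gamma h5 cT.
have gct : forall F : {set 'I_n * 'I_n}, chain_edges cs \subset F -> F \subset E' -> in_GCT cs T F.
  move=> F hcF hFE; split => // a w nce lt; apply/negP => hF.
  have haw : (a, w) \in E' by apply: (subsetP hFE).
  move: lt; rewrite /Tmax /succ; case: pickP => [b hb|none] lt.
    have nwb : w != b by apply: contraNneq nce => ->.
    case/andP: (h11 _ _ _ hb haw nwb) => _ lt2.
    exact: nE lt2 lt.
  rewrite hg in lt; case/andP: (h7 w (in_setT w)) => _ le.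
  exact: nF le lt.
split.
- split => // w; rewrite h3; exact: in_setT.
- split.
  + by move=> w; rewrite hg; apply: h7; rewrite in_setT.
  + by move=> w; rewrite h4; apply: h8.
  + by move=> w1 w2; rewrite h4; apply: h9; rewrite in_setT.
  + exact: h10.
- by apply: gct => //; rewrite /E'; apply: subsetU1.
- apply: gct => //; apply: subset_trans h6 _; rewrite /E'; apply: subsetU1.
Qed.

Lemma reach (hE : SSC E VC) (hE' : SSC E' VC) (uv : (u, v) \notin E) k :
  forall S cs T, #|~: S| = k -> Inv S cs T -> exists cs' T', Inv setT cs' T'.
Proof.
elim: k => [|k IH] S cs T hk hI.
  have : ~: S = set0 by apply: cards0_eq.
  move/(congr1 (fun X => ~: X)); rewrite setCK setC0 => eS.
  by exists cs, T; rewrite -eS.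
have nST : S != setT.
  by apply/eqP => eS; move: hk; rewrite eS setCT cards0.
pose D (F : {set 'I_n * 'I_n}) x := [set w | ((x, w) \in F) && (w \notin S)].
case: (boolP [exists x in S, exists y, (D E' x == [set y]) && ((x, y) != (u, v))]).
  case/exists_inP => x xS /existsP[y /andP[/eqP hD nuv]].
  have yD : y \in D E' x by rewrite hD set11.
  move: yD; rewrite inE => /andP[xyE' yS].
  have xyE : (x, y) \in E by move: xyE'; rewrite /E' in_setU1 (negbTE nuv).
  have hw : forall w, (x, w) \in E' -> w \notin S -> w = y.
    by move=> w h1 h2; apply/set1P; rewrite -hD inE h1 h2.
  have hI' := inv_step hI xS yS xyE hw.
  apply: (IH _ _ _ _ hI').
  have e : ~: (y |: S) = (~: S) :\ y by apply/setP => w; rewrite !inE negb_or.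
  rewrite e; move: hk; rewrite (cardsD1 y) inE yS => -[].
  by [].
rewrite negb_exists_in => /forall_inP hno.
have hno' : forall x y, x \in S -> D E' x = [set y] -> x = u /\ y = v.
  move=> x y xS hD; have := hno x xS; rewrite negb_exists => /forallP/(_ y).
  by rewrite hD eqxx /= negbK => /eqP[-> ->].
case: (boolP [exists x in S, #|D E' x| == 1]).
  case/exists_inP => x xS /cards1P[y hy].
  have [ex ey] := hno' _ _ xS hy.
  exfalso; apply: (not_ssc (i0 hI) nST _ hE).
  move=> z zS.
  case: (eqVneq z u) => [->|nzu].
    suff -> : [set w | ((u, w) \in E) && (w \notin S)] = set0 by rewrite cards0.
    apply/setP => w; rewrite !inE; apply/negP => /andP[huw wS].
    have : w \in D E' x by rewrite inE ex /E' in_setU1 huw orbT wS.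
    rewrite hy ey => /set1P ew; by rewrite -ew huw in uv.
  have -> : [set w | ((z, w) \in E) && (w \notin S)] = D E' z.
    apply/setP => w; rewrite /D /E' !inE.
    have -> : ((z, w) == (u, v)) = false by apply/eqP => -[ezu _]; rewrite ezu eqxx in nzu.
    by [].
  apply/negP => /cards1P[y' hy'].
  have [ezu _] := hno' _ _ zS hy'.
  by rewrite ezu eqxx in nzu.
rewrite negb_exists_in => /forall_inP hno2.
exfalso; apply: (not_ssc (i0 hI) nST _ hE').
by move=> z zS; apply: hno2.
Qed.

End Comb.

Theorem lemma1 (n : nat) (E : {set 'I_n * 'I_n}) (VC : {set 'I_n}) (u v : 'I_n) :
  SSC E VC -> (u, v) \notin E -> SSC ((u, v) |: E) VC ->
  exists (cs : seq (seq 'I_n)) (T : 'I_n -> nat),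
    [/\ chain_cover cs VC, time_function cs T, in_GCT cs T E & in_GCT cs T ((u, v) |: E)].
Proof.
move=> hE uv hE'.
have [cs [T hI]] := reach hE hE' uv (k := #|~: VC|) erefl (inv_init E VC u v).
by exists cs, T; apply: inv_final hI.
Qed.
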